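(* Let $F_c(t)=\log\big(1+2c\sinh\frac{t}{2}\big)$. For $t\ge 0$ the following hold: (1) if $c\ge 1$, then $\frac{t}{t+1}\log c+\frac{t}{2}\le F_c(t)$; (2) if $c>0$, then $F_c(t)\le \log\Big(c+\frac{1}{4c}\Big)+\frac{t}{2}$. Equality holds in (1) if and only if $t=0$, and equality holds in (2) if and only if $c\ge\frac12$ and $t=2\log(2c)$. *)

(* Defs.v *)
From Stdlib Require Export Reals.
Open Scope R_scope.

Definition F (c t : R) : R := ln (1 + 2 * c * sinh (t / 2)).

(* Main.v *)
Require Import Defs.
From Stdlib Require Import Reals Lra Psatz.
Open Scope R_scope.

Lemma ln_le' x y : 0 < x -> x <= y -> ln x <= ln y.
Proof. intros Hx Hxy; destruct (Rle_lt_or_eq_dec _ _ Hxy) as [H|H].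
  left; now apply ln_increasing. subst; lra. Qed.

Lemma Fe c t : F c t = ln (1 + c * (exp (t/2) - / exp (t/2))).
Proof. unfold F, sinh. rewrite exp_Ropp. f_equal. field. apply Rgt_not_eq, exp_pos. Qed.

Theorem lemma3p7 (c t : R) (ht : 0 <= t) :
  (1 <= c ->
     t / (t + 1) * ln c + t / 2 <= F c t /\
     (t / (t + 1) * ln c + t / 2 = F c t <-> t = 0)) /\
  (0 < c ->
     F c t <= ln (c + 1 / (4 * c)) + t / 2 /\
     (F c t = ln (c + 1 / (4 * c)) + t / 2 <-> 1 / 2 <= c /\ t = 2 * ln (2 * c))).
Proof.
  rewrite Fe.
  set (u := exp (t/2)).
  assert (Hu1 : 1 + t/2 <= u) by apply exp_ineq1_le.
  assert (Hu : 1 <= u) by lra.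
  set (v := (/ u)).
  assert (Huv : u * v = 1) by (unfold v; field; lra).
  assert (Hv : 0 < v) by (unfold v; apply Rinv_0_lt_compat; lra).
  assert (Hv1 : v <= 1) by nra.
  assert (Hutt : u * u = exp t) by (unfold u; rewrite <- exp_plus; f_equal; lra).
  assert (Het : 1 + t <= u * u) by (rewrite Hutt; apply exp_ineq1_le).
  split.
  - intros Hc.
    set (s := t / (t+1)).
    assert (Hs : s * (t+1) = t) by (unfold s; field; lra).
    assert (Hs0 : 0 <= s) by (unfold s; apply Rmult_le_pos; [lra| left; apply Rinv_0_lt_compat; lra]).
    assert (Hs1 : s <= 1) by nra.
    set (L := ln c).
    assert (HL : exp L = c) by (unfold L; apply exp_ln; lra).
    set (m := s * L).
    set (E := exp m).
    assert (HE : 0 < E) by apply exp_pos.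
    assert (H1 : E * (1 + (L - m)) <= c).
    { rewrite <- HL. assert (HH : exp L = E * exp (L - m)) by (unfold E; rewrite <- exp_plus; f_equal; ring).
      rewrite HH.
      apply Rmult_le_compat_l; [lra| apply exp_ineq1_le]. }
    assert (H2 : E * (1 - m) <= 1).
    { assert (HH : E * exp (-m) = 1) by (unfold E; rewrite <- exp_plus; replace (m + - m) with 0 by ring; apply exp_0).
      apply Rle_trans with (E * exp (-m)); [|lra].
      apply Rmult_le_compat_l; [lra| ]. replace (1 - m) with (1 + - m) by ring. apply exp_ineq1_le. }
    assert (H3 : E <= s * c + (1 - s)).
    { assert (Hm : m = s * L) by reflexivity.
      assert (s * (E * (1 + (L - m))) <= s * c) by (apply Rmult_le_compat_l; lra).
      assert ((1 - s) * (E * (1 - m)) <= (1 - s) * 1) by (apply Rmult_le_compat_l; lra).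
      rewrite Hm in *. nra. }
    assert (HA : 0 <= u - v - s * u).
    { assert ((t+1) * u * (u - v - s*u) = u*u - 1 - t) by nra.
      assert (0 < (t+1)*u) by nra. nra. }
    assert (HK : E * u <= 1 + c * (u - v)) by nra.
    assert (HLHS : m + t/2 = ln (E * u)).
    { unfold E, u. rewrite <- exp_plus, ln_exp. reflexivity. }
    rewrite HLHS. split.
    + apply ln_le'; [nra| exact HK].
    + split.
      * intros Heq. destruct (Req_dec t 0) as [|Ht]; [assumption|].
        exfalso.
        assert (Hu' : 1 < u) by lra.
        assert (Hv' : v < 1) by nra.
        assert (E * u < 1 + c * (u - v)) by nra.
        assert (ln (E*u) < ln (1 + c * (u - v))) by (apply ln_increasing; nra).
        lra.
      * intros Ht0. rewrite <- HLHS.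
        assert (u = 1) by (unfold u; rewrite Ht0; replace (0/2) with 0 by field; apply exp_0).
        assert (v = 1) by nra.
        unfold m, s. rewrite Ht0. replace (1 + c * (u - v)) with 1 by (rewrite H, H0; ring).
        rewrite ln_1. field.
  - intros Hc.
    set (K := c + 1 / (4*c)).
    assert (HK : 0 < K) by (unfold K; assert (0 < 1/(4*c)) by (apply Rdiv_lt_0_compat; lra); lra).
    assert (HR : ln K + t/2 = ln (K * u)) by (rewrite ln_mult; [unfold u; rewrite ln_exp; reflexivity | lra | unfold u; apply exp_pos]).
    assert (Hid : 4 * c * u * (K * u - (1 + c * (u - v))) = (u - 2*c)*(u - 2*c)).
    { unfold K. assert (Hinv : 4*c*(1/(4*c)) = 1) by (field; lra).
      transitivity (4*c*u*c*u + (4*c*(1/(4*c)))*u*u - 4*c*u - 4*c*c*u*u + 4*c*c*(u*v)); [ring | rewrite Hinv, Huv; ring]. }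
    assert (Hpos : 0 < 1 + c * (u - v)) by nra.
    assert (Hle : 1 + c * (u - v) <= K * u).
    { assert (H4 : 0 < 4*c*u) by nra.
      destruct (Rle_or_lt (1 + c*(u-v)) (K*u)) as [|Hlt]; [assumption|]. exfalso.
      assert (Hn : 4*c*u*(K*u - (1+c*(u-v))) < 0).
      { rewrite <- (Rmult_0_r (4*c*u)). apply Rmult_lt_compat_l; lra. }
      rewrite Hid in Hn. pose proof (Rle_0_sqr (u-2*c)) as Hq. unfold Rsqr in Hq. lra. }
    rewrite HR. split.
    + apply ln_le'; assumption.
    + split.
      * intros Heq. apply ln_inv in Heq; [|lra|nra].
        assert (Hu2 : (u - 2*c)*(u-2*c) = 0) by (rewrite <- Hid, <- Heq; ring).
        assert (Hu3 : u = 2*c) by nra.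
        split; [lra|]. rewrite <- Hu3. unfold u. rewrite ln_exp. field.
      * intros [Hc2 Ht]. f_equal.
        assert (Hu3 : u = 2*c) by (unfold u; rewrite Ht; replace (2 * ln (2*c) / 2) with (ln (2*c)) by field; apply exp_ln; lra).
        assert (Hz : 4 * c * u * (K * u - (1 + c * (u - v))) = 0) by (rewrite Hid, Hu3; ring).
        assert (0 < 4*c*u) by nra.
        apply Rmult_integral in Hz. destruct Hz; [lra|]. lra.
Qed.
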